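(* Let $G=(V,E)$ be a simple graph with $n=|V|$ nodes and minimum degree $d$, where $d$ is a constant independent of $n$. Let $l$ be an integer in $[1,d-1]$ and let $\phi>\frac{l}{d}$ be a fixed uniform threshold. Let $S\subseteq V$ be a uniformly random subset of size $k=o(n^{\frac{l}{l+1}})$. Then $$\Pr_{S}\left[\mathrm{inf}^\phi_G(S)=S\right]=1-o(1)$$ as $n\to\infty$.
   Context: A simple graph has no multi-edges and no self-loops. Uniform threshold cascading with threshold $\phi$: given an initial set $S$, all nodes of $S$ are infected; repeatedly, a not-yet-infected node becomes infected if at least a $\phi$ fraction of its neighbors are infected. The final infected set is $\mathrm{inf}^\phi_G(S)$. *)

(* Defs.v *)
From HB Require Import structures.
From mathcomp Require Import all_boot all_order all_algebra.
From mathcomp Require Import reals exp.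
Set Implicit Arguments. Unset Strict Implicit. Unset Printing Implicit Defensive.
Import Order.TTheory GRing.Theory Num.Theory.
Local Open Scope ring_scope.

Section Cascade.
Variable R : realType.
Variable T : finType.

Definition simple_graph (e : rel T) : Prop := symmetric e /\ irreflexive e.

Definition nbrs (e : rel T) (v : T) : {set T} := [set u | e v u].
Definition deg (e : rel T) (v : T) : nat := #|nbrs e v|.

Definition min_degree_is (e : rel T) (d : nat) : Prop :=
  (forall v, (d <= deg e v)%N) /\ (exists v, deg e v = d).

Definition cascade_step (phi : R) (e : rel T) (X : {set T}) : {set T} :=
  X :|: [set v | phi * (deg e v)%:R <= (#|nbrs e v :&: X|)%:R].

(* final infected set inf^phi_G(S): the process is monotone, so it stabilises
   after at most #|T| rounds. *)
Definition inf_set (phi : R) (e : rel T) (S : {set T}) : {set T} :=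
  iter #|T| (cascade_step phi e) S.

Definition prob_no_spread (phi : R) (e : rel T) (k : nat) : R :=
  (#|[set S : {set T} | (#|S| == k) && (inf_set phi e S == S)]|)%:R
  / ('C(#|T|, k))%:R.

End Cascade.

(* Main.v *)
Require Import Defs.
From HB Require Import structures.
From mathcomp Require Import all_boot all_order all_algebra.
From mathcomp Require Import reals exp.
From mathcomp Require Import zify ring lra.
Import Order.TTheory GRing.Theory Num.Theory.
Set Implicit Arguments. Unset Strict Implicit.

Lemma leq_expw m n e : (m <= n)%N -> (m ^ e <= n ^ e)%N.
Proof. by case: e => // e h; rewrite leq_exp2r. Qed.

Lemma bin_ratio t : forall n k, (t <= k)%N -> (k <= n)%N ->
  ('C(n - t, k - t) * n ^ t <= 'C(n, k) * k ^ t)%N.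
Proof.
elim: t => [|t IH] n k htk hkn; first by rewrite !subn0 !expn0 !muln1.
case: n hkn => [|n'] hkn; first by lia.
case: k htk hkn => [|k'] htk hkn; first by lia.
rewrite !subSS.
have IH' := IH n' k' htk hkn.
have hd := mul_bin_diag n'.+1 k'. rewrite /= in hd.
have hk0 : (0 < k' ^ t)%N.
  rewrite expn_gt0; apply/orP; case: (posnP k') => [e|h]; last by left.
  by right; move: htk; rewrite e ltnS leqn0.
have hp : (k' ^ t * n'.+1 ^ t <= n' ^ t * k'.+1 ^ t)%N.
  rewrite -!expnMn; apply: leq_expw; lia.
move: IH' hd hk0 hp.
set a := 'C(_, _); set b := 'C(n', k'); set c := 'C(_, _).
set x := (k' ^ t)%N; set y := (n'.+1 ^ t)%N; set z := (n' ^ t)%N; set w := (k'.+1 ^ t)%N.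
rewrite !expnSr -/y -/w => IH' hd hk0 hp.
rewrite -(leq_pmul2r hk0).
have s1 : (a * (x * y) <= a * (z * w))%N by rewrite leq_mul2l hp orbT.
have s2 : (a * z * w <= b * x * w)%N by rewrite leq_mul2r IH' orbT.
have s3 : (a * x * y <= b * x * w)%N by apply: leq_trans s2; rewrite -!mulnA; exact: s1.
have s4 : (n'.+1 * (a * x * y) <= n'.+1 * (b * x * w))%N by rewrite leq_mul2l s3 orbT.
have e1 : (a * (y * n'.+1) * x = n'.+1 * (a * x * y))%N by nia.
have e2 : (c * (w * k'.+1) * x = n'.+1 * b * x * w)%N by rewrite mulnC mulnA hd; nia.
rewrite e1 e2 -!mulnA; move: s4; rewrite -!mulnA; done.
Qed.

Lemma count_sup (T : finType) (A : {set T}) k : (k <= #|T|)%N ->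
  (#|[set S : {set T} | (#|S| == k) && (A \subset S)]| * #|T| ^ #|A|
     <= 'C(#|T|, k) * k ^ #|A|)%N.
Proof.
move=> hk.
case: (ltnP k #|A|) => hAk.
  have -> : [set S : {set T} | (#|S| == k) && (A \subset S)] = set0.
    apply/setP => S; rewrite !inE; apply/negbTE/negP => /andP[/eqP hS hAS].
    by have := subset_leq_card hAS; rewrite hS leqNgt hAk.
  by rewrite cards0.
pose Tg := [set S' : {set T} | S' \subset ~: A & #|S'| == k - #|A|].
have hTg : #|Tg| = 'C(#|T| - #|A|, k - #|A|).
  by rewrite cards_draws; congr 'C(_, _); have := cardsC A; lia.
have key (S : {set T}) : [disjoint S & A] -> (S :|: A) :\: A = S.
  by move=> dj; rewrite setDUl setDv setU0 (setDidPl dj).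
have hinj : {in Tg &, injective (fun S' => S' :|: A)}.
  move=> S1 S2; rewrite !inE => /andP[h1 _] /andP[h2 _] /= e.
  have dj1 : [disjoint S1 & A] by rewrite -(setCK A) -subsets_disjoint.
  have dj2 : [disjoint S2 & A] by rewrite -(setCK A) -subsets_disjoint.
  by rewrite -(key _ dj1) e key.
have hDom : [set S : {set T} | (#|S| == k) && (A \subset S)]
            = (fun S' => S' :|: A) @: Tg.
  apply/setP => S; apply/idP/idP.
    rewrite inE => /andP[/eqP hS hAS]; apply/imsetP; exists (S :\: A).
      rewrite inE; apply/andP; split; first by rewrite setDE subsetIr.
      by rewrite cardsD (setIidPr hAS) hS.
    apply/setP=> x; rewrite !inE; case hx: (x \in A); rewrite ?orbT ?orbF //=.
    exact: (subsetP hAS x hx).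
  move=> /imsetP[S' + ->]; rewrite /Tg inE => /andP[h1 /eqP h2].
  have dj : [disjoint S' & A] by rewrite -(setCK A) -subsets_disjoint.
  rewrite inE subsetUr andbT cardsU (disjoint_setI0 dj) cards0 h2 subn0 subnK //.
rewrite hDom (card_in_imset hinj) hTg.
exact: bin_ratio.
Qed.

Lemma card_bigcup_le (I U : finType) (P : pred I) (F : I -> {set U}) :
  (#|\bigcup_(i | P i) F i| <= \sum_(i | P i) #|F i|)%N.
Proof.
elim/big_rec2: _ => [|i s A _ H]; first by rewrite cards0. apply: leq_trans (leq_card_setU _ _) _; by rewrite leq_add2l.
Qed.

Lemma exists_sub (U : finType) (B : {set U}) t : (t <= #|B|)%N ->
  exists A : {set U}, (A \subset B) && (#|A| == t).
Proof.
move=> h.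
have : (0 < #|[set A : {set U} | A \subset B & #|A| == t]|)%N by rewrite cards_draws bin_gt0.
by case/card_gt0P => A; rewrite inE => hA; exists A.
Qed.

Local Open Scope ring_scope.

Lemma bad_bound (R : realType) (T : finType) (e : rel T) (d l : nat) (phi : R) k :
  (0 < d)%N -> (1 <= l)%N -> (forall v, d <= deg e v)%N -> l%:R / d%:R < phi ->
  (0 < #|T|)%N -> (2 ^ d * k <= #|T|)%N ->
  1 - #|T|%:R * ((2 ^ d * k)%:R / #|T|%:R) ^+ l.+1 <= prob_no_spread phi e k.
Proof.
move=> hd hl hdeg hphi hn hkn.
set n := #|T|.
have hkn' : (k <= n)%N by apply: leq_trans hkn; rewrite leq_pmull // expn_gt0.
pose t v := (l * deg e v %/ d).+1.
pose Good := [set S : {set T} | (#|S| == k) && (inf_set phi e S == S)].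
pose Bad := [set S : {set T} | (#|S| == k) && [exists v, t v <= #|nbrs e v :&: S|]%N].
pose F (A : {set T}) := [set S : {set T} | (#|S| == k) && (A \subset S)].
pose Dv v := [set A : {set T} | (A \subset nbrs e v) && (#|A| == t v)].
have hC : ('C(n, k) <= #|Good| + #|Bad|)%N.
  rewrite -card_draws; apply: leq_trans (leq_card_setU Good Bad).
  apply: subset_leq_card; apply/subsetP => S; rewrite !inE => hS.
  rewrite hS /=; case: existsP => [_|hnot]; first by rewrite orbT.
  rewrite orbF; apply/eqP; apply: iter_fix; rewrite /cascade_step.
  apply/setUidPl/subsetP => v; rewrite inE => hv.
  exfalso; apply: hnot; exists v.
  rewrite /t ltn_divLR //.
  set c := #|nbrs e v :&: S|; set D := deg e v.
  have hD : (0 < D%:R :> R) by rewrite ltr0n; apply: leq_trans hd (hdeg v).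
  have hd' : (0 < d%:R :> R) by rewrite ltr0n.
  rewrite -(ltr_nat R) !natrM.
  have h1 : l%:R / d%:R * D%:R < phi * D%:R by rewrite ltr_pM2r.
  have h2 := lt_le_trans h1 hv.
  by rewrite mulrAC ltr_pdivrMr // in h2.
have hBad : (#|Bad| <= \sum_v \sum_(A in Dv v) #|F A|)%N.
  have sub : Bad \subset \bigcup_v \bigcup_(A in Dv v) F A.
    apply/subsetP => S; rewrite inE => /andP[hS /existsP[v hv]].
    have [A /andP[hA1 /eqP hA2]] := exists_sub hv.
    apply/bigcupP; exists v => //; apply/bigcupP; exists A.
      by rewrite inE (subset_trans hA1 (subsetIl _ _)) hA2 eqxx.
    by rewrite inE hS /= (subset_trans hA1 (subsetIr _ _)).
  apply: leq_trans (subset_leq_card sub) _; apply: leq_trans (card_bigcup_le _ _) _.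
  by apply: leq_sum => v _; exact: card_bigcup_le.
have hF A : (#|F A|%:R : R) <= 'C(n, k)%:R * (k%:R / n%:R) ^+ #|A|.
  have := count_sup A hkn'; rewrite -(ler_nat R) !natrM !natrX => h.
  by rewrite expr_div_n mulrA ler_pdivlMr // exprn_gt0 // ltr0n.
have hDv v : (#|Dv v| <= (2 ^ d) ^ t v)%N.
  apply: (@leq_trans #|powerset (nbrs e v)|).
    by apply: subset_leq_card; apply/subsetP => A; rewrite powersetE inE => /andP[].
  rewrite card_powerset -expnM leq_pexp2l //.
  rewrite /t; change #|nbrs e v| with (deg e v); set D := deg e v.
  have hlt : (l * D < (l * D %/ d).+1 * d)%N by rewrite -ltn_divLR.
  rewrite mulnC; apply: leq_trans (ltnW hlt); by rewrite leq_pmull.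
have ht v : (l.+1 <= t v)%N.
  by rewrite ltnS leq_divRL // leq_mul2l hdeg orbT.
have hnR : (0 < n%:R :> R) by rewrite ltr0n.
have hx0 : (0 <= k%:R / n%:R :> R) by rewrite divr_ge0 // ler0n.
set y := (2 ^ d * k)%:R / n%:R.
have hy : y = (2 ^ d)%:R * (k%:R / n%:R) by rewrite /y natrM mulrA.
have hy0 : 0 <= y by rewrite hy mulr_ge0 // ler0n.
have hy1 : y <= 1 by rewrite /y ler_pdivrMr // mul1r ler_nat.
have hBadR : (#|Bad|%:R : R) <= 'C(n, k)%:R * (n%:R * y ^+ l.+1).
  apply: le_trans (_ : _ <= (\sum_v \sum_(A in Dv v) #|F A|)%N%:R) _; first by rewrite ler_nat.
  rewrite natr_sum.
  apply: le_trans (_ : _ <= \sum_(v : T) 'C(n, k)%:R * y ^+ l.+1) _; last first.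
    have hsum (x : R) : \sum_(v : T) x = n%:R * x by rewrite sumr_const mulr_natl.
    by rewrite hsum mulrCA.
  apply: ler_sum => v _; rewrite natr_sum.
  apply: le_trans (_ : _ <= \sum_(A in Dv v) 'C(n, k)%:R * (k%:R / n%:R) ^+ t v) _.
    by apply: ler_sum => A; rewrite inE => /andP[_ /eqP <-]; exact: hF.
  rewrite sumr_const -[_ *+ #|_|]mulr_natl; set c := _ * _ ^+ _.
  apply: le_trans (_ : _ <= ((2 ^ d) ^ t v)%N%:R * c) _.
    by apply: ler_wpM2r; [rewrite mulr_ge0 // ?ler0n // exprn_ge0 | rewrite ler_nat hDv].
  rewrite /c natrX mulrCA -exprMn -hy.
  by apply: ler_wpM2l; [rewrite ler0n | exact: ler_wiXn2l hy0 hy1 _ _ (ht v)].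
have hCpos : (0 < 'C(n, k)%:R :> R) by rewrite ltr0n bin_gt0.
have hC' : ('C(n, k)%:R <= #|Good|%:R + #|Bad|%:R :> R) by rewrite -natrD ler_nat.
rewrite /prob_no_spread -/n ler_pdivlMr //.
change (#|[set S : {set T} | (#|S| == k) && (inf_set phi e S == S)]|) with #|Good|.
set a := n%:R * y ^+ l.+1.
have -> : (1 - a) * 'C(n, k)%:R = 'C(n, k)%:R - 'C(n, k)%:R * a by ring.
rewrite lerBlDr; apply: le_trans hC' _; rewrite lerD2l.
exact: hBadR.
Qed.

Unset Implicit Arguments.

Theorem theorem8 (R : realType) (d l : nat) (phi : R)
  (N : nat -> nat) (G : forall m : nat, rel 'I_(N m)) (k : nat -> nat) :
  (1 <= l)%N -> (l <= d - 1)%N ->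
  l%:R / d%:R < phi ->
  (forall m, simple_graph (G m)) ->
  (forall m, min_degree_is (G m) d) ->
  (forall B : nat, exists M : nat, forall m, (M <= m)%N -> (B <= N m)%N) ->
  (forall eps : R, 0 < eps -> exists M : nat, forall m, (M <= m)%N ->
      (k m)%:R / ((N m)%:R `^ (l%:R / (l.+1)%:R)) < eps) ->
  forall eps : R, 0 < eps -> exists M : nat, forall m, (M <= m)%N ->
      1 - eps < prob_no_spread phi (G m) (k m).
Proof.
move=> hl1 hld hphi _ hmin hN hk eps heps.
have hd : (0 < d)%N by lia.
set K : R := ((2 ^ d) ^ l.+1)%N%:R.
have hK1 : (2 ^ d)%N%:R <= K.
  rewrite /K ler_nat; apply: leq_trans (leq_pexp2l _ (_ : 1 <= l.+1)%N) => //.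
  by rewrite expn_gt0.
have hK0 : 0 < K by apply: lt_le_trans hK1; rewrite ltr0n expn_gt0.
set mm := Num.min 1 eps.
have hmm0 : 0 < mm by rewrite lt_min ltr01 heps.
have hmm1 : mm <= 1 by rewrite ge_min lexx.
have hmme : mm <= eps by rewrite ge_min lexx orbT.
set eps2 := mm / (2 * K).
have he20 : 0 < eps2 by rewrite divr_gt0 // mulr_gt0.
have hKe : K * eps2 = mm / 2.
  by rewrite /eps2; field; rewrite pnatr_eq0 -lt0n !expn_gt0.
have h2d1 : (2 ^ d)%N%:R * eps2 <= 1.
  apply: le_trans (_ : K * eps2 <= 1); first by rewrite ler_wpM2r // ltW.
  by rewrite hKe; lra.
have he21 : eps2 <= 1.
  by apply: le_trans h2d1; apply: ler_peMl; [exact: ltW | rewrite ler1n expn_gt0].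
have [M1 HM1] := hk eps2 he20.
have [M2 HM2] := hN 1%N.
exists (maxn M1 M2) => m hm.
have hm1 : (M1 <= m)%N by apply: leq_trans hm; rewrite leq_maxl.
have hm2 : (M2 <= m)%N by apply: leq_trans hm; rewrite leq_maxr.
have hkm := HM1 m hm1.
have hn1 := HM2 m hm2.
set n := N m in hkm hn1 *; set kk := k m in hkm *.
set r : R := l%:R / (l.+1)%:R.
set p := n%:R `^ r.
have hnR1 : (1 <= n%:R :> R) by rewrite ler1n.
have hp0 : 0 < p by rewrite powR_gt0 // (lt_le_trans ltr01).
have hr1 : r <= 1 by rewrite /r ler_pdivrMr ?ltr0n // mul1r ler_nat.
have hpn : p <= n%:R by apply: ler1_powR.
have hpl : p ^+ l.+1 = n%:R ^+ l.
  rewrite -powR_mulrn ?ltW // -powRrM.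
  have -> : r * (l.+1)%:R = l%:R by rewrite /r mulrAC -mulrA divff ?mulr1 // pnatr_eq0.
  by rewrite powR_mulrn // ler0n.
have hkp : kk%:R < eps2 * p by rewrite -ltr_pdivrMr.
have hkn : (2 ^ d * kk <= n)%N.
  rewrite -(ler_nat R) natrM.
  apply: le_trans (_ : (2 ^ d)%N%:R * (eps2 * p) <= _).
    by rewrite ler_wpM2l ?ler0n // ltW.
  by rewrite mulrA; apply: le_trans hpn; apply: ler_piMl; [rewrite ltW|].
have hmd := (hmin m).1.
have hB := @bad_bound R _ (G m) d l phi kk hd hl1 hmd hphi.
rewrite card_ord in hB.
have hB' := hB (leq_trans (isT : (0 < 1)%N) hn1) hkn.
apply: lt_le_trans hB'.
rewrite ltrD2l ltrN2 -/n.
have hn0 : (n%:R : R) != 0 by rewrite pnatr_eq0 -lt0n.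
have hnl0 : (n%:R ^+ l : R) != 0 by rewrite expf_neq0.
have hX : n%:R * ((2 ^ d * kk)%:R / n%:R) ^+ l.+1 = K * kk%:R ^+ l.+1 / n%:R ^+ l.
  rewrite natrM expr_div_n exprMn /K [((2 ^ d) ^ l.+1)%N%:R]natrX [n%:R ^+ l.+1]exprS; field.
  by rewrite hn0 hnl0.
rewrite hX.
have hkl : kk%:R ^+ l.+1 <= eps2 ^+ l.+1 * n%:R ^+ l.
  rewrite -hpl -exprMn; apply: lerXn2r; rewrite ?nnegrE ?ler0n ?ltW //.
  by rewrite mulr_gt0.
have hnlp : (0 < n%:R ^+ l :> R) by rewrite exprn_gt0 // ltr0n.
apply: (@le_lt_trans _ _ (K * eps2)).
  rewrite -mulrA (ler_pM2l hK0) ler_pdivrMr //.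
  apply: le_trans hkl _; apply: ler_wpM2r; first exact: ltW.
  by rewrite -[X in _ <= X]expr1; apply: ler_wiXn2l => //; exact: ltW.
rewrite hKe; lra.
Qed.
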